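(* Assume the weights are asymptotically vanishing and there is $n_0$ such that for every $n\ge n_0$ the subgame perfect Nash equilibrium $\mathbf g^*_n$ exists, is unique and has the form $u^i_t=\theta^n_tx^i_t+(\bar\theta^n_t-\theta^n_t)\bar x_t$ with $\theta^n_t,\bar\theta^n_t$ uniformly bounded in $n$ and converging to $\theta^\infty_t,\bar\theta^\infty_t$. Let $n\ge n_0$, let $(x^i_t,u^i_t)$ be the states and actions under $\mathbf g^*_n$ and $(\hat x^i_t,\hat u^i_t)$ those under the no-sharing profile $\hat{\mathbf g}_n$, driven by the same initial states and noises. Then for every player $i$ and every $t\in\mathbb N_T$: $x^i_t-\bar x_t=\hat x^i_t-\hat{\bar x}_t$ and $u^i_t-\bar u_t=\hat u^i_t-\hat{\bar u}_t$; in particular $e^i_t=\zeta^i_t$. Consequently, with $e_t=\hat{\bar x}_t-z^n_t$ and $\zeta_t=\bar x_t-z^n_t$, $\mathrm{vec}(e^i_{t+1},e_{t+1},\zeta_{t+1})=\tilde A^n_t\,\mathrm{vec}(e^i_t,e_t,\zeta_t)+\mathrm{vec}(\Delta w^i_t,\bar w_t,\bar w_t)$, where $\tilde A^n_t=\mathrm{diag}\big(A_t+B_t\theta^n_t,\;A_t+\bar A_t+(B_t+\bar B_t)\theta^n_t,\;A_t+\bar A_t+(B_t+\bar B_t)\bar\theta^n_t\big)$ and $\Delta w^i_t=w^i_t-\bar w_t$. Similarly, when in the $n$-player game $(x,u)$ are generated by $u^i_t=\theta^\infty_tx^i_t+(\bar\theta^\infty_t-\theta^\infty_t)\bar x_t$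 and $(\hat x,\hat u)$ by $\hat{\mathbf g}_\infty$, the same relation holds with $\tilde A^n_t$ replaced by $\tilde A^\infty_t$ (defined with $\theta^\infty_t,\bar\theta^\infty_t$) and $z^n_t$ replaced by $z^\infty_t$ in $e_t,\zeta_t$.
   Context: Fix $T\ge1$, $d_x,d_u\ge1$, $n\ge2$; $\mathbb N_k=\{1,\dots,k\}$. Player $i\in\mathbb N_n$ has state $x^i_t\in\mathbb R^{d_x}$, action $u^i_t\in\mathbb R^{d_u}$, noise $w^i_t\in\mathbb R^{d_x}$; $\mathbf x_t=(x^1_t,\dots,x^n_t)$. Real weights $\alpha^i_n$, $\sum_i\alpha^i_n=1$; asymptotically vanishing: there exist $n_0,\gamma_{\max}>0$ with $\alpha^i_n=\gamma^i/n$, $\gamma^i\in[-\gamma_{\max},\gamma_{\max}]$, for $n>n_0$. $\bar x_t=\sum_i\alpha^i_nx^i_t$, $\bar u_t=\sum_i\alpha^i_nu^i_t$, $\bar w_t=\sum_i\alpha^i_nw^i_t$, and analogously $\hat{\bar x}_t,\hat{\bar u}_t$. Dynamics $x^i_{t+1}=A_tx^i_t+B_tu^i_t+\bar A_t\bar x_t+\bar B_t\bar u_t+w^i_t$; zero-mean noises, $\mathbf x_1,\mathbf w_1,\dots,\mathbf w_T$ mutually independent with bounded covariances. Per-step cost $c^i_t=(x^i_t)^\top Q_tx^i_t+2(x^i_t)^\top S^x_t\bar x_t+\bar x_t^\top\bar Q_t\bar x_t+(u^i_t)^\top R_tu^i_t+2(u^i_t)^\top S^u_t\bar u_t+\bar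 u_t^\top\bar R_t\bar u_t+\sum_j\alpha^j_n((x^j_t)^\top G^x_tx^j_t+(u^j_t)^\top G^u_tu^j_t)$; subgame perfect Nash equilibrium: perfect-sharing profile from which no unilateral perfect-sharing deviation lowers any player's expected cost-to-go $\mathbb E[\sum_{t=t_0}^Tc^i_t]$ at any $t_0$. Predictions $z^n_1=z^\infty_1=\mathbb E[\bar x_1]$, $z^n_{t+1}=(A_t+\bar A_t+(B_t+\bar B_t)\bar\theta^n_t)z^n_t$, $z^\infty_{t+1}=(A_t+\bar A_t+(B_t+\bar B_t)\bar\theta^\infty_t)z^\infty_t$. Profiles: $\hat{\mathbf g}_n$: $\hat u^i_t=\theta^n_t\hat x^i_t+(\bar\theta^n_t-\theta^n_t)z^n_t$; $\hat{\mathbf g}_\infty$: $\hat u^i_t=\theta^\infty_t\hat x^i_t+(\bar\theta^\infty_t-\theta^\infty_t)z^\infty_t$; under both $\hat x^i_1=x^i_1$ and $\hat x^i_{t+1}=A_t\hat x^i_t+B_t\hat u^i_t+\bar A_t\hat{\bar x}_t+\bar B_t\hat{\bar u}_t+w^i_t$. Relative distances: $e^i_t=\hat x^i_t-\hat{\bar x}_t$, $\zeta^i_t=x^i_t-\bar x_t$. *)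

(* Defs.v *)
From HB Require Import structures.
From mathcomp Require Import all_boot all_order all_algebra.
From mathcomp Require Import all_classical all_reals all_analysis.
Set Implicit Arguments. Unset Strict Implicit. Unset Printing Implicit Defensive.
Import Order.TTheory GRing.Theory Num.Theory.
Local Open Scope ring_scope.

Section Defs.
Variable R : realType.
Variables dx du : nat.

Definition wavg n (a : 'I_n -> R) (d : nat) (v : 'I_n -> 'cV[R]_d) : 'cV[R]_d :=
  \sum_(i < n) a i *: v i.

Definition vec3 (d : nat) (a b c : 'cV[R]_d) : 'cV[R]_(d + (d + d)) :=
  col_mx a (col_mx b c).
Definition diag3 (d : nat) (A B C : 'M[R]_d) : 'M[R]_(d + (d + d)) :=
  block_mx A 0 0 (block_mx B 0 0 C).

Definition weights_sum_one (alpha : forall n : nat, 'I_n -> R) : Prop :=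
  forall n : nat, (2 <= n)%N -> \sum_(i < n) alpha n i = 1.

Definition asympt_vanishing (alpha : forall n : nat, 'I_n -> R) : Prop :=
  exists (n0 : nat) (gmax : R), 0 < gmax /\
    forall n : nat, (n0 < n)%N ->
      exists gamma : 'I_n -> R,
        (forall i, - gmax <= gamma i <= gmax) /\
        (forall i, alpha n i = gamma i / n%:R).

Variables (A Abar : nat -> 'M[R]_dx) (B Bbar : nat -> 'M[R]_(dx, du)).

Definition feedback_traj n (a : 'I_n -> R) (T : nat) (th thb : nat -> 'M[R]_(du, dx))
  (x1 : 'I_n -> 'cV[R]_dx) (w : nat -> 'I_n -> 'cV[R]_dx)
  (x : nat -> 'I_n -> 'cV[R]_dx) (u : nat -> 'I_n -> 'cV[R]_du) : Prop :=
  (forall i, x 1%N i = x1 i) /\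
  forall t : nat, (1 <= t <= T)%N -> forall i,
    u t i = th t *m x t i + (thb t - th t) *m wavg a (x t) /\
    x t.+1 i = A t *m x t i + B t *m u t i + Abar t *m wavg a (x t)
               + Bbar t *m wavg a (u t) + w t i.

(* Prediction z: z_1 = E[xbar_1] = sum_i a^i m^i (m^i = E[x^i_1]),
   z_{t+1} = (A_t + Abar_t + (B_t + Bbar_t) thb_t) z_t. *)
Definition prediction n (a : 'I_n -> R) (T : nat) (thb : nat -> 'M[R]_(du, dx))
  (m : 'I_n -> 'cV[R]_dx) (z : nat -> 'cV[R]_dx) : Prop :=
  z 1%N = wavg a m /\
  forall t : nat, (1 <= t <= T)%N ->
    z t.+1 = (A t + Abar t + (B t + Bbar t) *m thb t) *m z t.

Definition nosharing_traj n (a : 'I_n -> R) (T : nat) (th thb : nat -> 'M[R]_(du, dx))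
  (z : nat -> 'cV[R]_dx)
  (x1 : 'I_n -> 'cV[R]_dx) (w : nat -> 'I_n -> 'cV[R]_dx)
  (xh : nat -> 'I_n -> 'cV[R]_dx) (uh : nat -> 'I_n -> 'cV[R]_du) : Prop :=
  (forall i, xh 1%N i = x1 i) /\
  forall t : nat, (1 <= t <= T)%N -> forall i,
    uh t i = th t *m xh t i + (thb t - th t) *m z t /\
    xh t.+1 i = A t *m xh t i + B t *m uh t i + Abar t *m wavg a (xh t)
               + Bbar t *m wavg a (uh t) + w t i.

Definition relative_conclusion n (a : 'I_n -> R) (T : nat) (th thb : nat -> 'M[R]_(du, dx))
  (z : nat -> 'cV[R]_dx) (w : nat -> 'I_n -> 'cV[R]_dx)
  (x : nat -> 'I_n -> 'cV[R]_dx) (u : nat -> 'I_n -> 'cV[R]_du)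
  (xh : nat -> 'I_n -> 'cV[R]_dx) (uh : nat -> 'I_n -> 'cV[R]_du) : Prop :=
  forall t : nat, (1 <= t <= T)%N -> forall i : 'I_n,
    [/\ x t i - wavg a (x t) = xh t i - wavg a (xh t),
        u t i - wavg a (u t) = uh t i - wavg a (uh t) &
        vec3 (xh t.+1 i - wavg a (xh t.+1)) (wavg a (xh t.+1) - z t.+1)
             (wavg a (x t.+1) - z t.+1)
        = diag3 (A t + B t *m th t)
                (A t + Abar t + (B t + Bbar t) *m th t)
                (A t + Abar t + (B t + Bbar t) *m thb t)
            *m vec3 (xh t i - wavg a (xh t)) (wavg a (xh t) - z t) (wavg a (x t) - z t)
          + vec3 (w t i - wavg a (w t)) (wavg a (w t)) (wavg a (w t))].

End Defs.

(* Main.v *)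
Require Import Defs.
From HB Require Import structures.
From mathcomp Require Import all_boot all_order all_algebra.
From mathcomp Require Import all_classical all_reals all_analysis.
Import Order.TTheory GRing.Theory Num.Theory.
Import numFieldNormedType.Exports.
Local Open Scope classical_set_scope.
Local Open Scope ring_scope.
Lemma zmod_aux (V : zmodType) (p q c1 c2 r p' q' r' : V) :
  (p + q + c1 + c2 + r) - (p' + q' + c1 + c2 + r') = (p - p') + (q - q') + (r - r').
Proof.
rewrite [p + q + c1 + c2 + r]addrAC [p' + q' + c1 + c2 + r']addrAC.
rewrite opprD addrACA subrr addr0.
rewrite [p + q + c1 + r]addrAC [p' + q' + c1 + r']addrAC.
rewrite opprD addrACA subrr addr0.
by rewrite opprD (addrACA (p + q)) opprD (addrACA p).
Qed.
Lemma zmod2 (V : zmodType) (a b c : V) : (a + (b - c)) - b = a - c.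
Proof. by rewrite addrCA [b + _]addrC addrK. Qed.
Lemma zmod2' (V : zmodType) (a b c : V) : (a + c) - (b + c) = a - b.
Proof. by rewrite opprD addrACA subrr addr0. Qed.
Lemma zmod3 (V : zmodType) (a b w c d : V) : (a + b + w) - (c + d) = (a - c) + (b - d) + w.
Proof. by rewrite addrAC opprD addrACA. Qed.
Lemma zmod4 (V : zmodType) (a b c d w : V) : a + b + c + d + w = a + c + (b + d) + w.
Proof. by rewrite [a + b + c]addrAC -[a + c + b + d]addrA. Qed.

Section G.
Variables (R : realType) (n : nat) (a : 'I_n -> R).
Hypothesis Ha : \sum_(i < n) a i = 1.

Lemma wavg_ext d (v v' : 'I_n -> 'cV[R]_d) : (forall i, v i = v' i) -> wavg a v = wavg a v'.
Proof. by move=> H; apply: eq_bigr => i _; rewrite H. Qed.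
Arguments wavg_ext {d v v'}.

Lemma wavg2 d k (M : 'M[R]_(d, k)) (p : 'I_n -> 'cV[R]_k) c :
  wavg a (fun i => M *m p i + c) = M *m wavg a p + c.
Proof.
rewrite /wavg; under eq_bigr => i _ do rewrite scalerDr.
rewrite big_split /= -scaler_suml Ha scale1r mulmx_sumr; congr (_ + _).
by apply: eq_bigr => i _; rewrite scalemxAr.
Qed.

Lemma wavg5 d k (A : 'M[R]_d) (B : 'M[R]_(d, k)) (p r : 'I_n -> 'cV[R]_d) (q : 'I_n -> 'cV[R]_k) c1 c2 :
  wavg a (fun i => A *m p i + B *m q i + c1 + c2 + r i) =
  A *m wavg a p + B *m wavg a q + c1 + c2 + wavg a r.
Proof.
rewrite /wavg; under eq_bigr => i _ do rewrite !scalerDr.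
rewrite !big_split /= -!scaler_suml Ha !scale1r !mulmx_sumr.
congr (_ + _ + _ + _ + _); by apply: eq_bigr => i _; rewrite scalemxAr.
Qed.

Lemma gen T dx du (A Abar : nat -> 'M[R]_dx) (B Bbar : nat -> 'M[R]_(dx, du))
  (th thb : nat -> 'M[R]_(du, dx)) z m x1 w x u xh uh :
  feedback_traj A Abar B Bbar a T th thb x1 w x u ->
  prediction A Abar B Bbar a T thb m z ->
  nosharing_traj A Abar B Bbar a T th thb z x1 w xh uh ->
  relative_conclusion A Abar B Bbar a T th thb z w x u xh uh.
Proof.
case=> Hx1 Hx [Hz1 Hz] [Hxh1 Hxh].
have Ubar t (Ht : (1 <= t <= T)%N) : wavg a (u t) = thb t *m wavg a (x t).
  by rewrite (wavg_ext (fun i => (Hx t Ht i).1)) wavg2 -mulmxDl addrC subrK.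
have Uhbar t (Ht : (1 <= t <= T)%N) :
    wavg a (uh t) = th t *m wavg a (xh t) + (thb t - th t) *m z t.
  by rewrite (wavg_ext (fun i => (Hxh t Ht i).1)) wavg2.
have Xn t (Ht : (1 <= t <= T)%N) : wavg a (x t.+1) =
   (A t + Abar t) *m wavg a (x t) + (B t + Bbar t) *m wavg a (u t) + wavg a (w t).
  by rewrite (wavg_ext (fun i => (Hx t Ht i).2)) wavg5 zmod4 !mulmxDl.
have Xhn t (Ht : (1 <= t <= T)%N) : wavg a (xh t.+1) =
   (A t + Abar t) *m wavg a (xh t) + (B t + Bbar t) *m wavg a (uh t) + wavg a (w t).
  by rewrite (wavg_ext (fun i => (Hxh t Ht i).2)) wavg5 zmod4 !mulmxDl.
have Urel t (Ht : (1 <= t <= T)%N) i :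
    u t i - wavg a (u t) = th t *m (x t i - wavg a (x t)).
  by rewrite (Hx t Ht i).1 Ubar // mulmxBr mulmxBl zmod2.
have Uhrel t (Ht : (1 <= t <= T)%N) i :
    uh t i - wavg a (uh t) = th t *m (xh t i - wavg a (xh t)).
  by rewrite (Hxh t Ht i).1 Uhbar // zmod2' mulmxBr.
have Xrel t (Ht : (1 <= t <= T)%N) i : x t.+1 i - wavg a (x t.+1) =
    (A t *m (x t i - wavg a (x t)) + B t *m (u t i - wavg a (u t))) + (w t i - wavg a (w t)).
  by rewrite (wavg_ext (fun i => (Hx t Ht i).2)) wavg5 (Hx t Ht i).2 zmod_aux !mulmxBr.
have Xhrel t (Ht : (1 <= t <= T)%N) i : xh t.+1 i - wavg a (xh t.+1) =
    (A t *m (xh t i - wavg a (xh t)) + B t *m (uh t i - wavg a (uh t))) + (w t i - wavg a (w t)).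
  by rewrite (wavg_ext (fun i => (Hxh t Ht i).2)) wavg5 (Hxh t Ht i).2 zmod_aux !mulmxBr.
have Claim t : (1 <= t <= T.+1)%N -> forall i, x t i - wavg a (x t) = xh t i - wavg a (xh t).
  elim: t => [//|t IH] Ht i.
  case: t IH Ht => [|t] IH Ht.
    by rewrite Hx1 Hxh1 (wavg_ext Hx1) (wavg_ext Hxh1).
  have Ht' : (1 <= t.+1 <= T)%N by rewrite ltnS in Ht.
  have Ht'' : (1 <= t.+1 <= T.+1)%N by rewrite ltnS in Ht; apply: leqW.
  by rewrite (Xrel _ Ht') (Xhrel _ Ht') (Urel _ Ht') (Uhrel _ Ht') (IH Ht'').
move=> t Ht i.
have Ht1 : (1 <= t <= T.+1)%N by case/andP: Ht => -> /leqW ->.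
split; first exact: Claim.
  by rewrite Urel // Uhrel // Claim.
rewrite /vec3 /diag3 !mul_block_col !mul0mx !addr0 !add0r !add_col_mx.
congr col_mx; first by rewrite Xhrel // Uhrel // mulmxDl -mulmxA.
congr col_mx.
  rewrite Xhn // Hz // (mulmxDl (A t + Abar t) ((B t + Bbar t) *m thb t)) -(mulmxA (B t + Bbar t)) Uhbar // zmod3 -!mulmxBr.
  by rewrite mulmxBl zmod2 -mulmxBr (mulmxDl (A t + Abar t) ((B t + Bbar t) *m th t)) -mulmxA.
rewrite Xn // Hz // (mulmxDl (A t + Abar t) ((B t + Bbar t) *m thb t)) -(mulmxA (B t + Bbar t)) Ubar // zmod3 -!mulmxBr.
by rewrite (mulmxDl (A t + Abar t) ((B t + Bbar t) *m thb t)) -mulmxA.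
Qed.
End G.

Theorem lemma3 (R : realType) (T dx du : nat)
  (A Abar : nat -> 'M[R]_dx) (B Bbar : nat -> 'M[R]_(dx, du))
  (alpha : forall n : nat, 'I_n -> R)
  (th thb : nat -> nat -> 'M[R]_(du, dx)) (thi thbi : nat -> 'M[R]_(du, dx))
  (n0 : nat)
  (Hsum : weights_sum_one alpha)
  (Hvan : asympt_vanishing alpha)
  (Hbnd : exists K : R, forall n t (p : 'I_du) (q : 'I_dx),
            (n0 <= n)%N -> (1 <= t <= T)%N ->
            `|th n t p q| <= K /\ `|thb n t p q| <= K)
  (Hcvg : forall t, (1 <= t <= T)%N -> forall (p : 'I_du) (q : 'I_dx),
            ((fun n : nat => th n t p q) @ \oo --> (thi t p q : R)) /\
            ((fun n : nat => thb n t p q) @ \oo --> (thbi t p q : R)))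
  (n : nat) (Hn0 : (n0 <= n)%N) (Hn2 : (2 <= n)%N)
  (x1 m : 'I_n -> 'cV[R]_dx) (w : nat -> 'I_n -> 'cV[R]_dx)
  (* part 1: g*_n versus the no-sharing profile hat g_n *)
  (x : nat -> 'I_n -> 'cV[R]_dx) (u : nat -> 'I_n -> 'cV[R]_du)
  (xh : nat -> 'I_n -> 'cV[R]_dx) (uh : nat -> 'I_n -> 'cV[R]_du)
  (z : nat -> 'cV[R]_dx)
  (Hx : feedback_traj A Abar B Bbar (alpha n) T (th n) (thb n) x1 w x u)
  (Hz : prediction A Abar B Bbar (alpha n) T (thb n) m z)
  (Hxh : nosharing_traj A Abar B Bbar (alpha n) T (th n) (thb n) z x1 w xh uh)
  (* part 2: infinite-population gains versus hat g_infty, in the n-player game *)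
  (x' : nat -> 'I_n -> 'cV[R]_dx) (u' : nat -> 'I_n -> 'cV[R]_du)
  (xh' : nat -> 'I_n -> 'cV[R]_dx) (uh' : nat -> 'I_n -> 'cV[R]_du)
  (zi : nat -> 'cV[R]_dx)
  (Hx' : feedback_traj A Abar B Bbar (alpha n) T thi thbi x1 w x' u')
  (Hzi : prediction A Abar B Bbar (alpha n) T thbi m zi)
  (Hxh' : nosharing_traj A Abar B Bbar (alpha n) T thi thbi zi x1 w xh' uh') :
  relative_conclusion A Abar B Bbar (alpha n) T (th n) (thb n) z w x u xh uh /\
  relative_conclusion A Abar B Bbar (alpha n) T thi thbi zi w x' u' xh' uh'.
Proof.
have Ha := Hsum n Hn2.
split; (eapply gen; [exact: Ha | eassumption | eassumption | eassumption]).
Qed.
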